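(* No tree is H--cordial.
   Context: Graphs are finite and simple. A labeling of a graph $G$ is a map $f:E(G)\to\{-1,+1\}$. Given a labeling $f$, for each vertex $v$ define $f(v)=\sum_{e\in I(v)} f(e)$, where $I(v)$ is the set of edges incident to $v$. For an integer $c$, $e_f(c)$ denotes the number of edges with label $c$, and $v_f(c)$ the number of vertices $v$ with $f(v)=c$. A labeling $f$ is H--cordial if there is a positive constant $K$ such that $|f(v)|=K$ for every vertex $v$, $|e_f(1)-e_f(-1)|\le 1$, and $|v_f(K)-v_f(-K)|\le 1$. A graph is H--cordial if it admits an H--cordial labeling. *)

(* Defs.v *)
From mathcomp Require Import all_boot all_order all_algebra.
Set Implicit Arguments. Unset Strict Implicit. Unset Printing Implicit Defensive.
Import Order.TTheory GRing.Theory Num.Theory.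
Local Open Scope ring_scope.

Definition simple_graph (T : finType) (e : rel T) : Prop :=
  symmetric e /\ irreflexive e.

Definition edges (T : finType) (e : rel T) : {set {set T}} :=
  [set [set x; y] | x in T, y in T & e x y].

Definition is_tree (T : finType) (e : rel T) : Prop :=
  [/\ 0 < #|T|,
      (forall x y : T, connect e x y) &
      ~ (exists c : seq T, [&& uniq c, 2 < size c & cycle e c])]%N.

Definition labeling (T : finType) (e : rel T) (f : {set T} -> int) : Prop :=
  forall E, E \in edges e -> f E = 1 \/ f E = -1.

Definition vlabel (T : finType) (e : rel T) (f : {set T} -> int) (v : T) : int :=
  \sum_(E in edges e | v \in E) f E.

Definition e_f (T : finType) (e : rel T) (f : {set T} -> int) (c : int) : nat :=
  #|[set E in edges e | f E == c]|.
Definition v_f (T : finType) (e : rel T) (f : {set T} -> int) (c : int) : nat :=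
  #|[set v : T | vlabel e f v == c]|.

Definition H_cordial_labeling (T : finType) (e : rel T) (f : {set T} -> int) : Prop :=
  labeling e f /\
  exists K : int, [/\ 0 < K,
     (forall v : T, `|vlabel e f v| = K),
     `|(e_f e f 1)%:Z - (e_f e f (-1))%:Z| <= 1 &
     `|(v_f e f K)%:Z - (v_f e f (-K))%:Z| <= 1].

Definition H_cordial (T : finType) (e : rel T) : Prop :=
  exists f : {set T} -> int, H_cordial_labeling e f.

(* Main.v *)
Require Import Defs.
From mathcomp Require Import all_boot all_order all_algebra.
From mathcomp Require Import zify.
Set Implicit Arguments. Unset Strict Implicit. Unset Printing Implicit Defensive.
Import Order.TTheory GRing.Theory Num.Theory.
Lemma edgesP (T : finType) (e : rel T) E :
  reflect (exists x y, e x y /\ E = [set x; y]) (E \in edges e).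
Proof.
apply: (iffP imset2P).
  by case=> x y _; rewrite inE => /andP[_ exy] ->; exists x, y.
by case=> x [y [exy ->]]; exists x y; rewrite ?inE ?exy.
Qed.

Definition eS (T : finType) (e : rel T) (S : {set T}) : rel T :=
  [rel x y | [&& e x y, x \in S & y \in S]].
Definition EI (T : finType) (e : rel T) (S : {set T}) : {set {set T}} :=
  [set E in edges e | E \subset S].

Lemma path_eS_in (T : finType) (e : rel T) S x p :
  path (eS e S) x p -> all (mem S) p.
Proof.
elim: p x => //= y p IH x /andP[/and3P[_ _ yS] /IH]; by rewrite yS.
Qed.

Lemma grow (T : finType) (e : rel T) : simple_graph e -> is_tree e ->
  forall k, (k < #|T|)%N -> exists S : {set T},
    [/\ #|S| = k.+1, (forall x y, x \in S -> y \in S -> connect (eS e S) x y)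
      & #|EI e S| = k].
Proof.
move=> [esym eirr] [n0 conn nocyc].
elim=> [_|k IH ltk].
  case/card_gt0P: n0 => r _; exists [set r]; split.
  - by rewrite cards1.
  - by move=> x y; rewrite !inE => /eqP-> /eqP->; apply: connect0.
  apply/eqP; rewrite cards_eq0; apply/eqP/setP => E; rewrite !inE.
  apply/negbTE/negP => /andP[/edgesP[x [y [exy ->]]]].
  rewrite subUset !sub1set !inE => /andP[/eqP xr /eqP yr].
  by move: exy; rewrite xr yr eirr.
have [S [cS connS cE]] := IH (ltnW ltk).
have [u [v [uS vS euv]]] : exists u v, [/\ u \in S, v \notin S & e u v].
  case: (pickP [pred p : T * T | [&& p.1 \in S, p.2 \notin S & e p.1 p.2]]).
    by move=> [u v] /and3P[? ? ?]; exists u, v.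
  move=> none; exfalso.
  have cl : closed e (mem S).
    move=> x y exy /=.
    case xS: (x \in S); case yS: (y \in S) => //.
      by have := none (x, y); rewrite /= xS yS exy.
    by have := none (y, x); rewrite /= xS yS esym exy.
  have [r rS] : exists r, r \in S by apply/card_gt0P; rewrite cS.
  have [s sS] : exists s, s \in ~: S.
    apply/card_gt0P; have := cardsC S; lia.
  move: sS; rewrite inE => /negP; apply.
  have := closed_connect cl (conn r s). rewrite /= rS. by [].
have uniq_nb : forall w, w \in S -> e v w -> w = u.
  move=> w wS evw; apply/eqP/negPn/negP => wu.
  have /connectP[p0 p0e p0l] := connS w u wS uS.
  move: p0l; case/shortenP: p0e => p pe puniq _ pl.
  apply: nocyc; exists (v :: w :: p).
  have pS := path_eS_in pe.
  have vp : v \notin w :: p.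
    rewrite inE negb_or; apply/andP; split.
      by apply/eqP => vw; move: vS; rewrite vw wS.
    by apply/negP => vp; move: vS; have := allP pS v vp; rewrite /= => ->.
  rewrite /= vp; move: puniq; rewrite /= => /andP[-> ->] /=.
  case: p pe pl pS vp => [|a p] pe pl pS vp.
    by move: wu; rewrite /= in pl; rewrite pl eqxx.
  rewrite rcons_path evw /=. idtac.
  have -> : last a p = u by rewrite pl.
  rewrite euv andbT -/(path e w (a :: p)).
  move: pe; apply: sub_path => x y /= /and3P[] //.
exists (v |: S); split.
- by rewrite cardsU1 vS cS.
- have sub : subrel (eS e S) (connect (eS e (v |: S))).
    move=> x y /and3P[exy xS yS]; apply: connect1.
    by rewrite /eS /= exy !inE xS yS !orbT.
  have cuv : connect (eS e (v |: S)) u v.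
    by apply: connect1; rewrite /eS /= euv !inE uS eqxx !orbT.
  have esS : symmetric (eS e (v |: S)).
    by move=> x y; rewrite /eS /= esym; case: (x \in _); case: (y \in _); rewrite ?andbF ?andbT.
  have mono : forall x y, x \in S -> y \in S -> connect (eS e (v |: S)) x y.
    by move=> x y xS yS; apply: (connect_sub sub); apply: connS.
  move=> x y; rewrite !inE => /orP[/eqP->|xS] /orP[/eqP->|yS].
  + exact: connect0.
  + by rewrite (sym_connect_sym esS); apply: connect_trans (mono _ _ yS uS) cuv.
  + exact: connect_trans (mono _ _ xS uS) cuv.
  + exact: mono.
have -> : EI e (v |: S) = [set u; v] |: EI e S.
  apply/setP => E; rewrite !inE; apply/idP/idP.
    case/andP => /edgesP[x [y [exy ->]]].
    rewrite subUset !sub1set !inE => /andP[/orP[/eqP xv|xS] /orP[/eqP yv|yS]].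
    + by move: exy; rewrite xv yv eirr.
    + rewrite xv in exy; rewrite xv (uniq_nb y yS exy) setUC eqxx //.
    + rewrite esym yv in exy; rewrite yv (uniq_nb x xS exy) eqxx //.
    + apply/orP; right; apply/andP; split; first by apply/edgesP; exists x, y.
      by rewrite subUset !sub1set xS yS.
  case/orP => [/eqP->|/andP[Ee ES]].
    rewrite subUset !sub1set !inE uS eqxx !orbT andbT.
    by apply/edgesP; exists u, v.
  rewrite Ee /=; apply: subset_trans ES _; exact: subsetUr.
rewrite cardsU1 cE.
have -> : [set u; v] \notin EI e S.
  rewrite inE negb_and; apply/orP; right.
  rewrite subUset !sub1set (negbTE vS) andbF //.
by [].
Qed.

Local Open Scope ring_scope.
Lemma split_sum (I : finType) (A : {set I}) (F : I -> int) (P : pred I) a b :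
  (forall i, i \in A -> P i -> F i = a) -> (forall i, i \in A -> ~~ P i -> F i = b) ->
  \sum_(i in A) F i = a * (#|[set i in A | P i]|)%:Z + b * (#|[set i in A | ~~ P i]|)%:Z.
Proof.
move=> ha hb; rewrite (bigID P) /=.
rewrite (eq_bigr (fun=> a)); last by move=> i /andP[]; apply: ha.
rewrite [X in _ + X](eq_bigr (fun=> b)); last by move=> i /andP[]; apply: hb.
have -> : \sum_(i in A | P i) a = \sum_(i in [set i in A | P i]) a.
  by apply: eq_bigl => i; rewrite inE.
have -> : \sum_(i in A | ~~ P i) b = \sum_(i in [set i in A | ~~ P i]) b.
  by apply: eq_bigl => i; rewrite inE.
by rewrite !sumr_const -!natz !mulr_natr.
Qed.

Lemma test (K b1 b2 a1 a2 : int) :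
  0 < K -> K * (b1 - b2) = 2 * (a1 - a2) ->
  a1 + a2 + 1 = b1 + b2 -> `|a1 - a2| <= 1 -> `|b1 - b2| <= 1 -> False.
Proof.
move=> K0 hK hn; rewrite !ler_norml => /andP[h1 h2] /andP[h3 h4].
have : b1 - b2 = 0 \/ b1 - b2 = 1 \/ b1 - b2 = -1 by lia.
case=> [d|[d|d]]; rewrite d ?mulr0 ?mulr1 ?mulrN1 in hK; lia.
Qed.

Lemma nedges (T : finType) (e : rel T) : simple_graph e -> is_tree e ->
  (#|edges e| + 1 = #|T|)%N.
Proof.
move=> sg tr; have n0 : (0 < #|T|)%N by case: tr.
have [S [cS _ cE]] := grow sg tr (k:=#|T|.-1) ltac:(lia).
have ST : S = [set: T] by apply/eqP; rewrite eqEcard subsetT cardsT cS; lia.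
have -> : edges e = EI e S.
  by apply/setP => E; rewrite ST inE subsetT andbT.
lia.
Qed.

Lemma sum_vl (T : finType) (e : rel T) (f : {set T} -> int) : simple_graph e ->
  \sum_(v in [set: T]) vlabel e f v = 2 * \sum_(E in edges e) f E.
Proof.
move=> [esym eirr]; rewrite /vlabel.
transitivity (\sum_(v : T) \sum_(E in edges e | v \in E) f E).
  by apply: eq_bigl => v; rewrite inE.
rewrite (exchange_big_dep (fun E => E \in edges e)) /=; last by move=> v E _ /andP[].
rewrite mulr_sumr; apply: eq_bigr => E /edgesP[x [y [exy ->]]].
have Ee : [set x; y] \in edges e by apply/edgesP; exists x, y.
have xy : x != y by apply/eqP => exy'; move: exy; rewrite exy' eirr.
rewrite (eq_bigl (fun i => i \in [set x; y])); last by move=> i; rewrite Ee.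
rewrite sumr_const cards2 xy /= mulr2n; lia.
Qed.

Theorem corollary1 (T : finType) (e : rel T) :
  simple_graph e -> is_tree e -> ~ H_cordial e.
Proof.
move=> sg tr [f [lab [K [K0 hK he hv]]]].
have nE := nedges sg tr.
have sv := sum_vl f sg.
have hvb : forall v, v \in [set: T] -> ~~ (vlabel e f v == K) -> vlabel e f v = - K.
  move=> v _ /eqP nK; have := hK v; lia.
have heb : forall E, E \in edges e -> ~~ (f E == 1) -> f E = - 1.
  by move=> E /lab [->|->] //; rewrite eqxx.
rewrite (split_sum (P := fun v => vlabel e f v == K) (a := K) (b := - K)) in sv; last first.
- exact: hvb.
- by move=> v _ /eqP.
rewrite (split_sum (P := fun E => f E == 1) (a := 1) (b := - 1)) in sv; last first.
- exact: heb.
- by move=> E _ /eqP.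
have cV := split_sum (A := [set: T]) (F := fun=> 1) (P := fun v => vlabel e f v == K) (a := 1) (b := 1) (fun _ _ _ => erefl) (fun _ _ _ => erefl).
have cE := split_sum (A := edges e) (F := fun=> 1) (P := fun E => f E == 1) (a := 1) (b := 1) (fun _ _ _ => erefl) (fun _ _ _ => erefl).
rewrite sumr_const cardsT -natz in cV.
rewrite sumr_const -natz in cE.
have e1 : e_f e f 1 = #|[set E in edges e | f E == 1]| by [].
have e2 : e_f e f (-1) = #|[set E in edges e | ~~ (f E == 1)]|.
  rewrite /e_f; apply: eq_card => E; rewrite !inE.
  case Ee: (E \in edges e) => //=.
  by case: (lab E Ee) => ->.
have v1 : v_f e f K = #|[set v in [set: T] | vlabel e f v == K]|.
  by rewrite /v_f; apply: eq_card => v; rewrite !inE.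
have v2 : v_f e f (- K) = #|[set v in [set: T] | ~~ (vlabel e f v == K)]|.
  rewrite /v_f; apply: eq_card => v; rewrite !inE.
  have := hK v; case: (vlabel e f v =P K) => [->|nK]; lia.
rewrite e1 e2 in he; rewrite v1 v2 in hv.
move: sv cV cE he hv.
set a1 := #|[set E in edges e | f E == 1]|.
set a2 := #|[set E in edges e | ~~ (f E == 1)]|.
set b1 := #|[set v in [set: T] | vlabel e f v == K]|.
set b2 := #|[set v in [set: T] | ~~ (vlabel e f v == K)]|.
move=> sv cV cE he hv.
apply: (test K0 _ _ he hv).
  by rewrite mulrBr; move: sv; rewrite mulNr => ->; lia.
rewrite !natz in cV cE; lia.
Qed.
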